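(* Let $(X,Y,\eta,\mu,\psi,\epsilon,\delta,\phi)$ be a left Frobenius pair in a monoidal category $(\mathfrak{C},\otimes,\mathbbm{1})$, and set $\alpha=\phi\circ\eta\colon\mathbbm{1}\to Y\otimes X$ and $\beta=\epsilon\circ\psi\colon X\otimes Y\to\mathbbm{1}$. Then \[ (\beta\otimes X)\circ(X\otimes\alpha)=\mathrm{id}_X \quad\text{and}\quad (Y\otimes\beta)\circ(\alpha\otimes Y)=\mathrm{id}_Y, \] so $X$ is left dualizable with dual $Y$. Consequently, for all objects $U,V$ of $\mathfrak{C}$ there are bijections, natural in $U$ and $V$, \[ \lambda\colon \operatorname{Hom}_{\mathfrak{C}}(X\otimes U,V)\to\operatorname{Hom}_{\mathfrak{C}}(U,Y\otimes V),\quad \lambda(f)=(Y\otimes f)\circ(\phi\eta\otimes U), \] with inverse $g\mapsto(\epsilon\psi\otimes V)\circ(X\otimes g)$, and \[ \rho\colon \operatorname{Hom}_{\mathfrak{C}}(U\otimes Y,V)\to\operatorname{Hom}_{\mathfrak{C}}(U,V\otimes X),\quad \rho(f)=(f\otimes X)\circ(U\otimes\phi\eta), \] with inverse $g\mapsto(V\otimes\epsilon\psi)\circ(g\otimes Y)$.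
   Context: Throughout, $(\mathfrak{C},\otimes,\mathbbm{1})$ is a monoidal category; associativity and unit isomorphisms are suppressed (identifying $\mathbbm{1}\otimes A=A=A\otimes\mathbbm{1}$). A \emph{left Frobenius pair} in $\mathfrak{C}$ consists of objects $X,Y$ and morphisms $\epsilon\colon Y\to\mathbbm{1}$, $\eta\colon\mathbbm{1}\to X$, $\delta\colon Y\to Y\otimes Y$, $\mu\colon X\otimes X\to X$, $\phi\colon X\to Y\otimes X$, $\psi\colon X\otimes Y\to Y$ such that: (1a) $(X,\eta,\mu)$ is an associative unital monoid: $\mu(\mu\otimes X)=\mu(X\otimes\mu)$, $\mu(\eta\otimes X)=\mathrm{id}_X=\mu(X\otimes\eta)$; (1b) $(Y,\epsilon,\delta)$ is a coassociative counital comonoid: $(\delta\otimes Y)\delta=(Y\otimes\delta)\delta$, $(\epsilon\otimes Y)\delta=\mathrm{id}_Y=(Y\otimes\epsilon)\delta$; (2a) $\psi$ is a left $X$-module structure on $Y$: $\psi(\mu\otimes Y)=\psi(X\otimes\psi)$, $\psi(\eta\otimes Y)=\mathrm{id}_Y$; (2b) $\phi$ is a left $Y$-comodule structure on $X$: $(\delta\otimes X)\phi=(Y\otimes\phi)\phi$, $(\epsilon\otimes X)\phi=\mathrm{id}_X$; (3a) $\phi$ is a left $X$-module map: $\phi\circ\mu=(\psi\otimes X)\circ(X\otimes\phi)$; (3b) $\psi$ is a left $Y$-comodule map: $\delta\circ\psi=(Y\otimes\psi)\circ(\phi\otimes Y)$. *)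

(* Defs.v *)
Set Implicit Arguments.
Unset Strict Implicit.

(** A (not necessarily strict) monoidal category, with explicit associator
    and unitors.  Hom-sets are types, equality of morphisms is Leibniz. *)
Record MonCat : Type := {
  Ob :> Type;
  Hom : Ob -> Ob -> Type;
  comp : forall A B C, Hom B C -> Hom A B -> Hom A C;
  idm : forall A, Hom A A;
  comp_assoc : forall A B C D (h : Hom C D) (g : Hom B C) (f : Hom A B),
    comp h (comp g f) = comp (comp h g) f;
  comp_id_l : forall A B (f : Hom A B), comp (idm B) f = f;
  comp_id_r : forall A B (f : Hom A B), comp f (idm A) = f;

  tens : Ob -> Ob -> Ob;
  tensm : forall A A' B B', Hom A A' -> Hom B B' -> Hom (tens A B) (tens A' B');
  tens_id : forall A B, tensm (idm A) (idm B) = idm (tens A B);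
  tens_comp : forall A A' A'' B B' B''
      (f : Hom A' A'') (g : Hom A A') (h : Hom B' B'') (k : Hom B B'),
    tensm (comp f g) (comp h k) = comp (tensm f h) (tensm g k);

  unit : Ob;

  assoc : forall A B C, Hom (tens (tens A B) C) (tens A (tens B C));
  assoc_inv : forall A B C, Hom (tens A (tens B C)) (tens (tens A B) C);
  assoc_iso1 : forall A B C, comp (assoc_inv A B C) (assoc A B C) = idm _;
  assoc_iso2 : forall A B C, comp (assoc A B C) (assoc_inv A B C) = idm _;
  assoc_nat : forall A A' B B' C C' (f : Hom A A') (g : Hom B B') (h : Hom C C'),
    comp (assoc A' B' C') (tensm (tensm f g) h)
    = comp (tensm f (tensm g h)) (assoc A B C);

  lunit : forall A, Hom (tens unit A) A;
  lunit_inv : forall A, Hom A (tens unit A);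
  lunit_iso1 : forall A, comp (lunit_inv A) (lunit A) = idm _;
  lunit_iso2 : forall A, comp (lunit A) (lunit_inv A) = idm _;
  lunit_nat : forall A B (f : Hom A B),
    comp (lunit B) (tensm (idm unit) f) = comp f (lunit A);

  runit : forall A, Hom (tens A unit) A;
  runit_inv : forall A, Hom A (tens A unit);
  runit_iso1 : forall A, comp (runit_inv A) (runit A) = idm _;
  runit_iso2 : forall A, comp (runit A) (runit_inv A) = idm _;
  runit_nat : forall A B (f : Hom A B),
    comp (runit B) (tensm f (idm unit)) = comp f (runit A);

  pentagon : forall A B C D,
    comp (assoc A B (tens C D)) (assoc (tens A B) C D)
    = comp (tensm (idm A) (assoc B C D))
        (comp (assoc A (tens B C) D) (tensm (assoc A B C) (idm D)));
  triangle : forall A B,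
    comp (tensm (idm A) (lunit B)) (assoc A unit B)
    = tensm (runit A) (idm B)
}.

Arguments Hom {m} _ _.
Arguments comp {m A B C} _ _.
Arguments idm {m} A.
Arguments tens {m} _ _.
Arguments tensm {m A A' B B'} _ _.
Arguments unit {m}.
Arguments assoc {m} A B C.
Arguments assoc_inv {m} A B C.
Arguments lunit {m} A.
Arguments lunit_inv {m} A.
Arguments runit {m} A.
Arguments runit_inv {m} A.

Declare Scope moncat_scope.
Delimit Scope moncat_scope with MC.
Notation "g ∘ f" := (comp g f) (at level 40, left associativity) : moncat_scope.
Notation "A ⊗ B" := (tens A B) (at level 35, right associativity) : moncat_scope.
Notation "f ⊠ g" := (tensm f g) (at level 35, right associativity) : moncat_scope.
Open Scope moncat_scope.

(** Left Frobenius pair (X, Y, eta, mu, psi, eps, delta, phi); the suppressed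
    associativity/unit isomorphisms of the paper are inserted explicitly. *)
Record LeftFrobeniusPair (C : MonCat) (X Y : C)
    (eps : Hom Y unit) (eta : Hom unit X) (delta : Hom Y (Y ⊗ Y))
    (mu : Hom (X ⊗ X) X) (phi : Hom X (Y ⊗ X)) (psi : Hom (X ⊗ Y) Y) : Prop := {
  lfp_mu_assoc : mu ∘ (mu ⊠ idm X) = mu ∘ (idm X ⊠ mu) ∘ assoc X X X;
  lfp_mu_unit_l : mu ∘ (eta ⊠ idm X) = lunit X;
  lfp_mu_unit_r : mu ∘ (idm X ⊠ eta) = runit X;
  lfp_delta_coassoc : assoc Y Y Y ∘ (delta ⊠ idm Y) ∘ delta = (idm Y ⊠ delta) ∘ delta;
  lfp_delta_counit_l : (eps ⊠ idm Y) ∘ delta = lunit_inv Y;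
  lfp_delta_counit_r : (idm Y ⊠ eps) ∘ delta = runit_inv Y;
  lfp_psi_assoc : psi ∘ (mu ⊠ idm Y) = psi ∘ (idm X ⊠ psi) ∘ assoc X X Y;
  lfp_psi_unit : psi ∘ (eta ⊠ idm Y) = lunit Y;
  lfp_phi_coassoc : assoc Y Y X ∘ (delta ⊠ idm X) ∘ phi = (idm Y ⊠ phi) ∘ phi;
  lfp_phi_counit : (eps ⊠ idm X) ∘ phi = lunit_inv X;
  lfp_phi_linear : phi ∘ mu = (psi ⊠ idm X) ∘ assoc_inv X Y X ∘ (idm X ⊠ phi);
  lfp_psi_colinear : delta ∘ psi = (idm Y ⊠ psi) ∘ assoc Y X Y ∘ (phi ⊠ idm Y)
}.

Definition lam_map (C : MonCat) (X Y U V : C) (alpha : Hom unit (Y ⊗ X))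
    (f : Hom (X ⊗ U) V) : Hom U (Y ⊗ V) :=
  (idm Y ⊠ f) ∘ assoc Y X U ∘ (alpha ⊠ idm U) ∘ lunit_inv U.

Definition lam_inv (C : MonCat) (X Y U V : C) (beta : Hom (X ⊗ Y) unit)
    (g : Hom U (Y ⊗ V)) : Hom (X ⊗ U) V :=
  lunit V ∘ (beta ⊠ idm V) ∘ assoc_inv X Y V ∘ (idm X ⊠ g).

Definition rho_map (C : MonCat) (X Y U V : C) (alpha : Hom unit (Y ⊗ X))
    (f : Hom (U ⊗ Y) V) : Hom U (V ⊗ X) :=
  (f ⊠ idm X) ∘ assoc_inv U Y X ∘ (idm U ⊠ alpha) ∘ runit_inv U.

Definition rho_inv (C : MonCat) (X Y U V : C) (beta : Hom (X ⊗ Y) unit)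
    (g : Hom U (V ⊗ X)) : Hom (U ⊗ Y) V :=
  runit V ∘ (idm V ⊠ beta) ∘ assoc V X Y ∘ (g ⊠ idm Y).

(* Main.v *)
Require Import Defs.

Ltac grp L := lazymatch L with
 | ?x ∘ ?r => grp r; try rewrite (comp_assoc x r)
 | _ => idtac end.
Ltac nrm := repeat rewrite <- comp_assoc; rewrite ?tens_id, ?comp_id_l, ?comp_id_r.
Ltac rw H := let H' := fresh in pose proof H as H'; repeat rewrite <- comp_assoc in H'; rewrite ?tens_id in H';
  nrm; match type of H' with ?L = _ => grp L end; rewrite H'; clear H'; nrm.

Lemma tl {C : MonCat} (A : C) {B B' D : C} (f : Hom B' D) (g : Hom B B') :
  (f ∘ g) ⊠ idm A = (f ⊠ idm A) ∘ (g ⊠ idm A).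
Proof. rewrite <- tens_comp, comp_id_l; reflexivity. Qed.
Lemma tr {C : MonCat} (A : C) {B B' D : C} (f : Hom B' D) (g : Hom B B') :
  idm A ⊠ (f ∘ g) = (idm A ⊠ f) ∘ (idm A ⊠ g).
Proof. rewrite <- tens_comp, comp_id_l; reflexivity. Qed.
Lemma x1 {C : MonCat} {A A' B B' : C} (f : Hom A A') (g : Hom B B') :
  (f ⊠ idm B') ∘ (idm A ⊠ g) = f ⊠ g.
Proof. rewrite <- tens_comp, comp_id_l, comp_id_r; reflexivity. Qed.
Lemma x2 {C : MonCat} {A A' B B' : C} (f : Hom A A') (g : Hom B B') :
  (idm A' ⊠ g) ∘ (f ⊠ idm B) = f ⊠ g.
Proof. rewrite <- tens_comp, comp_id_l, comp_id_r; reflexivity. Qed.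

Lemma ainv_nat {C : MonCat} {A A' B B' D D' : C} (f : Hom A A') (g : Hom B B') (h : Hom D D') :
  assoc_inv A' B' D' ∘ (f ⊠ (g ⊠ h)) = ((f ⊠ g) ⊠ h) ∘ assoc_inv A B D.
Proof.
  rewrite <- (comp_id_r (assoc_inv A' B' D' ∘ _)).
  rewrite <- (assoc_iso2 A B D). nrm.
  rw (eq_sym (assoc_nat f g h)). rw (assoc_iso1 A' B' D'). reflexivity.
Qed.
Lemma linv_nat {C : MonCat} {A B : C} (f : Hom A B) :
  (idm unit ⊠ f) ∘ lunit_inv A = lunit_inv B ∘ f.
Proof.
  rewrite <- (comp_id_l (_ ∘ lunit_inv A)).
  rewrite <- (lunit_iso1 B). nrm.
  rw (lunit_nat f). rw (lunit_iso2 A). reflexivity.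
Qed.
Lemma rinv_nat {C : MonCat} {A B : C} (f : Hom A B) :
  (f ⊠ idm unit) ∘ runit_inv A = runit_inv B ∘ f.
Proof.
  rewrite <- (comp_id_l (_ ∘ runit_inv A)).
  rewrite <- (runit_iso1 B). nrm.
  rw (runit_nat f). rw (runit_iso2 A). reflexivity.
Qed.

Lemma lfaith {C : MonCat} (A B : C) (f g : Hom A B) :
  idm unit ⊠ f = idm unit ⊠ g -> f = g.
Proof.
  intro H.
  rewrite <- (comp_id_r f), <- (comp_id_r g), <- (lunit_iso2 A).
  rewrite !comp_assoc, <- !lunit_nat, H. reflexivity.
Qed.
Lemma rfaith {C : MonCat} (A B : C) (f g : Hom A B) :
  f ⊠ idm unit = g ⊠ idm unit -> f = g.
Proof.
  intro H.
  rewrite <- (comp_id_r f), <- (comp_id_r g), <- (runit_iso2 A).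
  rewrite !comp_assoc, <- !runit_nat, H. reflexivity.
Qed.

Lemma kelly_l {C : MonCat} (A B : C) :
  lunit (A ⊗ B) ∘ assoc unit A B = lunit A ⊠ idm B.
Proof.
  apply lfaith.
  assert (HP : (assoc unit (unit ⊗ A) B ∘ (assoc unit unit A ⊠ idm B)) ∘
               ((assoc_inv unit unit A ⊠ idm B) ∘ assoc_inv unit (unit ⊗ A) B) = idm _).
  { nrm. rw (eq_sym (tl B (assoc unit unit A) (assoc_inv unit unit A))).
    rewrite assoc_iso2. nrm. rw (assoc_iso2 unit (unit ⊗ A) B). reflexivity. }
  rewrite <- (comp_id_r (idm unit ⊠ (lunit (A ⊗ B) ∘ assoc unit A B))).
  rewrite <- (comp_id_r (idm unit ⊠ (lunit A ⊠ idm B))).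
  rewrite <- HP. rewrite !comp_assoc. f_equal.
  rewrite tr. nrm.
  rw (eq_sym (pentagon unit unit A B)).
  rw (triangle unit (A ⊗ B)).
  rw (eq_sym (assoc_nat (runit unit) (idm A) (idm B))).
  rw (eq_sym (triangle unit A)).
  rw (tl B (idm unit ⊠ lunit A) (assoc unit unit A)).
  rw (assoc_nat (idm unit) (lunit A) (idm B)).
  reflexivity.
Qed.

Lemma kelly_r {C : MonCat} (A B : C) :
  (idm A ⊠ runit B) ∘ assoc A B unit = runit (A ⊗ B).
Proof.
  apply rfaith.
  assert (HI : forall (f g : Hom (((A ⊗ B) ⊗ unit) ⊗ unit) ((A ⊗ B) ⊗ unit)),
     assoc A B unit ∘ f = assoc A B unit ∘ g -> f = g).
  { intros f g H. rewrite <- (comp_id_l f), <- (comp_id_l g), <- (assoc_iso1 A B unit).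
    rewrite <- !comp_assoc, H. reflexivity. }
  symmetry. apply HI.
  rw (eq_sym (triangle (A ⊗ B) unit)).
  rw (assoc_nat (idm A) (idm B) (lunit unit)).
  rw (pentagon A B unit unit).
  rw (eq_sym (tr A (idm B ⊠ lunit unit) (assoc B unit unit))).
  rw (triangle B unit).
  rw (eq_sym (assoc_nat (idm A) (runit B) (idm unit))).
  rw (eq_sym (tl unit (idm A ⊠ runit B) (assoc A B unit))).
  reflexivity.
Qed.

Lemma kform {C : MonCat} {A B D : C} {f : Hom A B} {g : Hom D A} {h : Hom D B} :
  f ∘ g = h -> forall E (k : Hom E D), f ∘ (g ∘ k) = h ∘ k.
Proof. intros H E k. rewrite comp_assoc, H. reflexivity. Qed.

Definition ai1 {C : MonCat} (A B D : C) := assoc_iso1 A B D.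
Definition ai2 {C : MonCat} (A B D : C) := assoc_iso2 A B D.
Definition ai1k {C : MonCat} (A B D : C) := kform (assoc_iso1 A B D).
Definition ai2k {C : MonCat} (A B D : C) := kform (assoc_iso2 A B D).
Definition li1k {C : MonCat} (A : C) := kform (lunit_iso1 A).
Definition li2k {C : MonCat} (A : C) := kform (lunit_iso2 A).
Definition ri1k {C : MonCat} (A : C) := kform (runit_iso1 A).
Definition ri2k {C : MonCat} (A : C) := kform (runit_iso2 A).
Lemma tlk {C : MonCat} (A : C) {B B' D E : C} (f : Hom B' D) (g : Hom B B') (k : Hom E (B ⊗ A)) :
  (f ⊠ idm A) ∘ ((g ⊠ idm A) ∘ k) = ((f ∘ g) ⊠ idm A) ∘ k.
Proof. rewrite tl, comp_assoc. reflexivity. Qed.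
Lemma trk {C : MonCat} (A : C) {B B' D E : C} (f : Hom B' D) (g : Hom B B') (k : Hom E (A ⊗ B)) :
  (idm A ⊠ f) ∘ ((idm A ⊠ g) ∘ k) = (idm A ⊠ (f ∘ g)) ∘ k.
Proof. rewrite tr, comp_assoc. reflexivity. Qed.

Ltac simp := repeat progress (nrm; rewrite ?assoc_iso1, ?assoc_iso2, ?lunit_iso1, ?lunit_iso2,
   ?runit_iso1, ?runit_iso2, ?ai1k, ?ai2k, ?li1k, ?li2k, ?ri1k, ?ri2k, <- ?tl, <- ?tr, ?tlk, ?trk).

Lemma inv_eq {C : MonCat} {A B : C} {f g : Hom A B} {f' g' : Hom B A} :
  f = g -> f' ∘ f = idm A -> g ∘ g' = idm B -> f' = g'.
Proof. intros E H1 H2. subst g. rewrite <- (comp_id_r f'), <- H2, comp_assoc, H1, comp_id_l. reflexivity. Qed.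

Lemma kelly_l_inv {C : MonCat} (A B : C) :
  assoc_inv unit A B ∘ lunit_inv (A ⊗ B) = lunit_inv A ⊠ idm B.
Proof.
  apply (inv_eq (kelly_l A B)); simp; reflexivity.
Qed.
Lemma kelly_r_inv {C : MonCat} (A B : C) :
  assoc_inv A B unit ∘ (idm A ⊠ runit_inv B) = runit_inv (A ⊗ B).
Proof.
  apply (inv_eq (kelly_r A B)); simp; reflexivity.
Qed.
Lemma tri_inv {C : MonCat} (A B : C) :
  assoc_inv A unit B ∘ (idm A ⊠ lunit_inv B) = runit_inv A ⊠ idm B.
Proof.
  apply (inv_eq (triangle A B)); simp; reflexivity.
Qed.
Lemma tri2 {C : MonCat} (A B : C) :
  assoc A unit B ∘ (runit_inv A ⊠ idm B) = idm A ⊠ lunit_inv B.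
Proof. rewrite <- tri_inv. simp. reflexivity. Qed.
Lemma tri3 {C : MonCat} (A B : C) :
  (runit A ⊠ idm B) ∘ assoc_inv A unit B = idm A ⊠ lunit B.
Proof. rewrite <- triangle. simp. reflexivity. Qed.

Lemma pent1 {C : MonCat} (A B D E : C) :
  assoc_inv A B (D ⊗ E) ∘ (idm A ⊠ assoc B D E)
  = assoc (A ⊗ B) D E ∘ (assoc_inv A B D ⊠ idm E) ∘ assoc_inv A (B ⊗ D) E.
Proof.
  assert (HP : (assoc A (B ⊗ D) E ∘ (assoc A B D ⊠ idm E)) ∘
      ((assoc_inv A B D ⊠ idm E) ∘ assoc_inv A (B ⊗ D) E) = idm _) by (simp; reflexivity).
  rewrite <- (comp_id_r (assoc_inv A B (D ⊗ E) ∘ _)).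
  rewrite <- HP. nrm.
  rw (eq_sym (pentagon A B D E)). simp. reflexivity.
Qed.
Lemma pent2 {C : MonCat} (A B D E : C) :
  (idm A ⊠ assoc_inv B D E) ∘ assoc A B (D ⊗ E)
  = assoc A (B ⊗ D) E ∘ (assoc A B D ⊠ idm E) ∘ assoc_inv (A ⊗ B) D E.
Proof.
  rewrite <- (comp_id_r ((idm A ⊠ assoc_inv B D E) ∘ _)).
  rewrite <- (assoc_iso2 (A ⊗ B) D E). nrm.
  rw (pentagon A B D E). simp. reflexivity.
Qed.
Lemma pent3 {C : MonCat} (A B D E : C) :
  assoc A B (D ⊗ E) ∘ assoc (A ⊗ B) D E ∘ (assoc_inv A B D ⊠ idm E)
  = (idm A ⊠ assoc B D E) ∘ assoc A (B ⊗ D) E.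
Proof. rw (pentagon A B D E). simp. reflexivity. Qed.
Lemma pent4 {C : MonCat} (A B D E : C) :
  (assoc A B D ⊠ idm E) ∘ assoc_inv (A ⊗ B) D E ∘ assoc_inv A B (D ⊗ E)
  = assoc_inv A (B ⊗ D) E ∘ (idm A ⊠ assoc_inv B D E).
Proof.
  assert (P : assoc_inv (A ⊗ B) D E ∘ assoc_inv A B (D ⊗ E) =
     (assoc_inv A B D ⊠ idm E) ∘ (assoc_inv A (B ⊗ D) E ∘ (idm A ⊠ assoc_inv B D E))).
  { apply (inv_eq (pentagon A B D E)); simp; reflexivity. }
  rw P. simp. reflexivity.
Qed.

Theorem mainTheorem2 (C : MonCat) (X Y : C)
    (eps : Hom Y unit) (eta : Hom unit X) (delta : Hom Y (Y ⊗ Y))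
    (mu : Hom (X ⊗ X) X) (phi : Hom X (Y ⊗ X)) (psi : Hom (X ⊗ Y) Y) :
  LeftFrobeniusPair eps eta delta mu phi psi ->
  let alpha := phi ∘ eta in
  let beta := eps ∘ psi in
  lunit X ∘ (beta ⊠ idm X) ∘ assoc_inv X Y X ∘ (idm X ⊠ alpha) ∘ runit_inv X = idm X /\
  runit Y ∘ (idm Y ⊠ beta) ∘ assoc Y X Y ∘ (alpha ⊠ idm Y) ∘ lunit_inv Y = idm Y /\
  (forall U V : C,
     (forall f : Hom (X ⊗ U) V, lam_inv beta (lam_map alpha f) = f) /\
     (forall g : Hom U (Y ⊗ V), lam_map alpha (lam_inv beta g) = g)) /\
  (forall (U U' V V' : C) (u : Hom U' U) (v : Hom V V') (f : Hom (X ⊗ U) V),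
     lam_map alpha (v ∘ f ∘ (idm X ⊠ u)) = (idm Y ⊠ v) ∘ lam_map alpha f ∘ u) /\
  (forall U V : C,
     (forall f : Hom (U ⊗ Y) V, rho_inv beta (rho_map alpha f) = f) /\
     (forall g : Hom U (V ⊗ X), rho_map alpha (rho_inv beta g) = g)) /\
  (forall (U U' V V' : C) (u : Hom U' U) (v : Hom V V') (f : Hom (U ⊗ Y) V),
     rho_map alpha (v ∘ f ∘ (u ⊠ idm Y)) = (v ⊠ idm X) ∘ rho_map alpha f ∘ u).
Proof.
  intros F alpha beta.
  destruct F.
  assert (Z1 : lunit X ∘ (beta ⊠ idm X) ∘ assoc_inv X Y X ∘ (idm X ⊠ alpha) ∘ runit_inv X = idm X).
  { unfold alpha, beta. nrm. rw (tl X eps psi). rw (tr X phi eta).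
    rw (eq_sym lfp_phi_linear). rw lfp_mu_unit_r. rw lfp_phi_counit. simp. reflexivity. }
  assert (Z2 : runit Y ∘ (idm Y ⊠ beta) ∘ assoc Y X Y ∘ (alpha ⊠ idm Y) ∘ lunit_inv Y = idm Y).
  { unfold alpha, beta. nrm. rw (tr Y eps psi). rw (tl Y phi eta).
    rw (eq_sym lfp_psi_colinear). rw lfp_psi_unit. rw lfp_delta_counit_r. simp. reflexivity. }
  split; [exact Z1|]. split; [exact Z2|].
  split; [|split; [|split]].
  - intros U V. split.
    + intro f. unfold lam_inv, lam_map. rewrite !tr. nrm.
      rw (ainv_nat (idm X) (idm Y) f). rw (x1 beta f). rw (eq_sym (x2 beta f)).
      rw (lunit_nat f).
      rw (pent1 X Y X U). rw (eq_sym (assoc_nat beta (idm X) (idm U))). rw (kelly_l X U).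
      rw (ainv_nat (idm X) alpha (idm U)). rw (tri_inv X U).
      assert (ZU := f_equal (fun h => h ⊠ idm U) Z1). simpl in ZU. rewrite !tl in ZU.
      rw ZU. reflexivity.
    + intro g. unfold lam_inv, lam_map. rewrite !tr. nrm.
      rw (eq_sym (assoc_nat (idm Y) (idm X) g)). rw (x2 alpha g). rw (eq_sym (x1 alpha g)).
      rw (linv_nat g).
      rw (pent2 Y X Y V). rw (eq_sym (assoc_nat (idm Y) beta (idm V))). rw (triangle Y V).
      rw (ainv_nat alpha (idm Y) (idm V)). rw (kelly_l_inv Y V).
      assert (ZV := f_equal (fun h => h ⊠ idm V) Z2). simpl in ZV. rewrite !tl in ZV.
      rw ZV. reflexivity.
  - intros U U' V V' u v f. unfold lam_map. rewrite !tr. nrm.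
    rw (eq_sym (assoc_nat (idm Y) (idm X) u)). rw (x2 alpha u). rw (eq_sym (x1 alpha u)).
    rw (linv_nat u). reflexivity.
  - intros U V. split.
    + intro f. unfold rho_inv, rho_map. rewrite !tl. nrm.
      rw (assoc_nat f (idm X) (idm Y)). rw (x2 f beta). rw (eq_sym (x1 f beta)).
      rw (runit_nat f). rw (eq_sym (kelly_r U Y)). rw (assoc_nat (idm U) (idm Y) beta).
      rw (pent3 U Y X Y). rw (assoc_nat (idm U) alpha (idm Y)). rw (tri2 U Y).
      assert (ZU := f_equal (fun h => idm U ⊠ h) Z2). simpl in ZU. rewrite !tr in ZU.
      rw ZU. reflexivity.
    + intro g. unfold rho_inv, rho_map. rewrite !tl. nrm.
      rw (eq_sym (ainv_nat g (idm Y) (idm X))). rw (x1 g alpha). rw (eq_sym (x2 g alpha)).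
      rw (rinv_nat g). rw (eq_sym (kelly_r_inv V X)). rw (eq_sym (ainv_nat (idm V) (idm X) alpha)).
      rw (pent4 V X Y X). rw (eq_sym (ainv_nat (idm V) beta (idm X))). rw (tri3 V X).
      assert (ZV := f_equal (fun h => idm V ⊠ h) Z1). simpl in ZV. rewrite !tr in ZV.
      rw ZV. reflexivity.
  - intros U U' V V' u v f. unfold rho_map. rewrite !tl. nrm.
    rw (eq_sym (ainv_nat u (idm Y) (idm X))). rw (x1 u alpha). rw (eq_sym (x2 u alpha)).
    rw (rinv_nat u). reflexivity.
Qed.
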